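(* For any set of $n$ points in the plane there is a conflict-free coloring with respect to axis-parallel rectangles using $O(\sqrt{n}\log n)$ colors that allows weak deletions at the cost of one recoloring per deletion.
   Context: A coloring of a point set $P$ is conflict-free with respect to rectangles if every axis-parallel rectangle containing at least one point of $P$ contains a point whose color is unique among the points of $P$ it contains. Allowing weak deletions at cost one means: points can be deleted one at a time, each deletion recoloring at most one remaining point, such that the coloring remains valid and the number of colors never exceeds the initial bound. *)

(* Defs.v *)
From Stdlib Require Import Reals.
From mathcomp Require Import all_boot finmap.
From mathcomp Require Import Rstruct.

Set Implicit Arguments.
Unset Strict Implicit.
Unset Printing Implicit Defensive.

Local Open Scope fset_scope.

Definition point := (R * R)%type.

Definition in_rect (a1 b1 a2 b2 : R) (p : point) : Prop :=
  [/\ Rle a1 p.1, Rle p.1 b1, Rle a2 p.2 & Rle p.2 b2].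

Definition conflict_free (S : {fset point}) (c : point -> nat) : Prop :=
  forall a1 b1 a2 b2 : R,
    (exists p, p \in S /\ in_rect a1 b1 a2 b2 p) ->
    exists p, [/\ p \in S, in_rect a1 b1 a2 b2 p &
      forall q, q \in S -> in_rect a1 b1 a2 b2 q -> q <> p -> c q <> c p].

Definition colors_within (k : nat) (S : {fset point}) (c : point -> nat) : Prop :=
  forall p, p \in S -> c p < k.

Definition recolors_at_most_one (S : {fset point}) (c c' : point -> nat) : Prop :=
  exists x, forall p, p \in S -> p <> x -> c' p = c p.

(* weak_deletions k S c : c is a valid (conflict-free, <= k colors) coloring of S,
   and for every point p of S that an adversary may delete next, there is a new
   coloring of S \ p, obtained by recoloring at most one remaining point, from which
   the same property holds again (online strategy; the bound k never increases). *)
Inductive weak_deletions (k : nat) : {fset point} -> (point -> nat) -> Prop :=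
| WeakDel : forall S c,
    conflict_free S c ->
    colors_within k S c ->
    (forall p, p \in S -> exists c',
        recolors_at_most_one (S `\ p) c c' /\ weak_deletions k (S `\ p) c') ->
    weak_deletions k S c.

(* Main.v *)
Require Import Defs.
From Stdlib Require Import Reals Lra Classical.
From mathcomp Require Import all_boot finmap.
From mathcomp Require Import Rstruct.
From mathcomp Require Import zify.

Set Implicit Arguments.
Unset Strict Implicit.
Unset Printing Implicit Defensive.
Local Open Scope fset_scope.
Local Open Scope R_scope.

Definition convex (S : {fset point}) (ch : point -> nat) (key : point -> R) (T : point -> Prop) : Prop :=
  forall a b q, T a -> T b -> q \in S -> ch q = ch a -> key a <= key q -> key q <= key b -> T q.

Definition UM (S : {fset point}) (ch : point -> nat) (key : point -> R) (c : point -> nat) : Prop :=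
  forall T : point -> Prop, (forall q, T q -> q \in S) -> (forall a b, T a -> T b -> ch a = ch b) ->
  convex S ch key T ->
  forall q0, T q0 -> exists m, T m /\ forall q, T q -> q <> m -> (c q < c m)%N.

Definition INJ (S : {fset point}) (ch : point -> nat) (key : point -> R) : Prop :=
  forall p q, p \in S -> q \in S -> ch p = ch q -> key p = key q -> p = q.

Lemma L_max (f : point -> R) (P : point -> Prop) (s : seq point) :
  (exists x, x \in s /\ P x) ->
  exists a, [/\ a \in s, P a & forall b, b \in s -> P b -> f b <= f a].
Proof.
elim: s => [|x s IH] [y [Hy Py]]; first by rewrite in_nil in Hy.
case: (classic (exists z, z \in s /\ P z)) => [H|H].
- case: (IH H) => a [Ha Pa Hmax].
  case: (classic (P x /\ f a < f x)) => [[Px Hlt]|Hn].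
  + exists x; split => //; first exact: mem_head.
    move=> b; rewrite in_cons => /orP [/eqP -> | Hb] Pb; first lra.
    by have := Hmax b Hb Pb; lra.
  + exists a; split => //; first by rewrite in_cons Ha orbT.
    move=> b; rewrite in_cons => /orP [/eqP -> | Hb] Pb; last exact: Hmax.
    apply: Rnot_lt_le => Hlt; apply: Hn; split => //.
- have Hyx : y = x.
  { move: Hy; rewrite in_cons => /orP [/eqP //|Hys]. exfalso; apply: H; by exists y. }
  subst y. exists x; split => //.
  move=> b; rewrite in_cons => /orP [/eqP -> | Hb] Pb; first lra.
  exfalso; apply: H; by exists b.
Qed.

Lemma left_nb (S : {fset point}) (ch : point -> nat) (key : point -> R) (p a : point) :
  a \in S -> ch a = ch p -> key a < key p ->
  exists l, [/\ l \in S, ch l = ch p, key a <= key l, key l < key p &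
     forall z, z \in S -> ch z = ch p -> key z < key p -> key z <= key l].
Proof.
move=> Ha Hca Hka.
have [l [Hl [Hcl Hkl] Hmax]] := @L_max key (fun z => ch z = ch p /\ key z < key p) S
   (ex_intro _ a (conj Ha (conj Hca Hka))).
exists l; split => //; first exact: Hmax.
move=> z Hz Hcz Hkz; exact: Hmax.
Qed.

Lemma safe (S : {fset point}) (ch : point -> nat) (key : point -> R) (c : point -> nat) (p : point) : INJ S ch key -> UM S ch key c -> p \in S ->
  (forall a b, a \in S -> b \in S -> ch a = ch p -> ch b = ch p -> key a < key p -> key p < key b ->
     exists q, [/\ q \in S, ch q = ch p, q <> p, key a <= key q /\ key q <= key b & (c p < c q)%N]) ->
  UM (S `\ p) ch key c.
Proof.
move=> Hinj Hum Hp Hcond T Tsub Tch Tconv q0 Tq0.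
have TS : forall q, T q -> q \in S /\ q <> p.
{ move=> q /Tsub; rewrite in_fsetD1 => /andP [/eqP ? ?]; by []. }
case: (classic (exists a b, [/\ T a, T b, ch a = ch p, key a < key p & key p < key b]))
  => [[a [b [Ta Tb Hca Hka Hkb]]]|Hno].
- pose T2 := fun q => T q \/ q = p.
  have [m [T2m Hm]] : exists m, T2 m /\ forall q, T2 q -> q <> m -> (c q < c m)%N.
  { apply: (Hum T2).
    - by move=> q [/TS [] //| ->].
    - move=> x y [Tx|->] [Ty|->] //.
      + exact: Tch.
      + by rewrite (Tch x a Tx Ta).
      + by rewrite (Tch y a Ty Ta).
    - move=> x y q Hx Hy Hq Hcq Hxq Hqy.
      case: (eqVneq q p) => [->|Hqp]; first by right.
      left. have Hq' : q \in S `\ p by rewrite in_fsetD1 Hqp Hq.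
      case: Hx => [Tx|Exp]; case: Hy => [Ty|Eyp].
      + exact: (Tconv x y q Tx Ty Hq' Hcq Hxq Hqy).
      + subst y. apply: (Tconv x b q Tx Tb Hq' Hcq Hxq). lra.
      + subst x. apply: (Tconv a y q Ta Ty Hq'); [by rewrite Hcq Hca | lra | exact Hqy].
      + subst x y. exfalso; move/eqP: Hqp; apply. apply: Hinj => //. lra.
    - by left; exact: Ta. }
  case: T2m => [Tm | Emp].
  + exists m; split => // q Tq Hqm. apply: Hm => //; by left.
  + subst m. exfalso.
    have Hcb : ch b = ch p by rewrite -(Tch a b Ta Tb).
    have [q [Hq Hcq Hqp [Hq1 Hq2] Hcpq]] := Hcond a b (proj1 (TS a Ta)) (proj1 (TS b Tb)) Hca
       Hcb Hka Hkb.
    have Tq : T q.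
    { apply: (Tconv a b q Ta Tb) => //; first by rewrite in_fsetD1 Hq andbT; apply/eqP.
      by rewrite Hcq Hca. }
    have := Hm q (or_introl Tq) Hqp. lia.
- apply: (Hum T) (Tq0).
  + by move=> q /TS [].
  + exact: Tch.
  + move=> x y q Tx Ty Hq Hcq Hxq Hqy.
    case: (eqVneq q p) => [Eqp|Hqp]; last first.
    { apply: (Tconv x y q Tx Ty) => //. by rewrite in_fsetD1 Hqp Hq. }
    subst q. exfalso. apply: Hno. exists x, y.
    have [Hx Hxp] := TS x Tx. have [Hy Hyp] := TS y Ty.
    have Hcy : ch y = ch p by rewrite Hcq (Tch y x Ty Tx).
    split => //.
    + case: (Rle_lt_or_eq_dec _ _ Hxq) => // E. exfalso; apply: Hxp; exact: Hinj.
    + case: (Rle_lt_or_eq_dec _ _ Hqy) => // E. exfalso; apply: Hyp; exact: Hinj.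
Qed.

Lemma swap (S : {fset point}) (ch : point -> nat) (key : point -> R) (c : point -> nat) (p l : point) :
  INJ S ch key -> p \in S -> l \in S -> l <> p -> ch l = ch p ->
  (forall z, z \in S -> ch z = ch p -> z <> p -> z <> l ->
     (key z < key l /\ key z < key p) \/ (key l < key z /\ key p < key z)) ->
  UM (S `\ l) ch key c -> UM (S `\ p) ch key (fun q => if q == l then c p else c q).
Proof.
move=> Hinj Hp Hl Hlp Hch Hadj Hum T Tsub Tch Tconv q0 Tq0.
have TS : forall q, T q -> q \in S /\ q <> p.
{ move=> q /Tsub; rewrite in_fsetD1 => /andP [/eqP ? ?]; by []. }
have inD : forall q, q \in S -> q <> p -> q \in S `\ p.
{ move=> q Hq Hqp. rewrite in_fsetD1 Hq andbT. by apply/eqP. }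
pose T2 := fun q => (T q /\ q <> l) \/ (q = p /\ T l).
have T2T : forall x, T2 x -> exists x', T x' /\ ch x = ch x'.
{ move=> x [[Tx _]|[-> Tl]]; [by exists x | exists l; by split]. }
have [m [T2m Hm]] : exists m, T2 m /\ forall q, T2 q -> q <> m -> (c q < c m)%N.
{ have [z0 T2z] : exists z, T2 z.
  { case: (eqVneq q0 l) => [E|Hq0l]; [subst q0; exists p; right; by split | exists q0; left; split => //; exact/eqP]. }
  apply: (Hum T2 _ _ _ z0 T2z).
  - move=> q [[Tq Hql]|[-> _]].
    + rewrite in_fsetD1 (proj1 (TS q Tq)) andbT. by apply/eqP.
    + rewrite in_fsetD1 Hp andbT. apply/eqP => E. by apply: Hlp.
  - move=> x y /T2T [x' [Tx' ->]] /T2T [y' [Ty' ->]]. exact: Tch.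
  - move=> x y q Hx Hy Hq Hcq Hxq Hqy.
    move: Hq; rewrite in_fsetD1 => /andP [/eqP Hql HqS].
    have [x' [Tx' Ecx]] := T2T x Hx.
    case: (eqVneq (ch x) (ch p)) => [Ecp|Ncp]; last first.
    { (* other chain: p and l not involved *)
      have Hqp : q <> p by move=> E; move: Ncp; rewrite -Hcq E eqxx.
      have Hxl : forall z, T2 z -> ch z = ch x -> T z /\ z <> p /\ z <> l.
      { move=> z [[Tz Hzl]|[Ezp Tl]] Hcz.
        - by split => //; split => //; case: (TS z Tz).
        - exfalso; move: Ncp; by rewrite -Hcz Ezp eqxx. }
      have [Tx _] := Hxl x Hx erefl.
      have Hcy : ch y = ch x.
      { have [y' [Ty' Ecy]] := T2T y Hy. by rewrite Ecy Ecx (Tch y' x' Ty' Tx'). }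
      have [Ty _] := Hxl y Hy Hcy.
      left; split => //. apply: (Tconv x y q Tx Ty) => //. exact: inD. }
    have Hcy : ch y = ch p.
    { have [y' [Ty' Ecy]] := T2T y Hy. by rewrite Ecy -(Tch x' y' Tx' Ty') -Ecx. }
    have Hcq' : ch q = ch p by rewrite Hcq.
    have Kx : exists x', T x' /\ ((x = p /\ x' = l) \/ (x' = x /\ x <> p /\ x <> l)).
    { case: Hx => [[Tx Hxl]|[Exp Tl]].
      - exists x; split => //; right; split => //; split => //; by case: (TS x Tx).
      - exists l; split => //; left; by split. }
    have Ky : exists y', T y' /\ ((y = p /\ y' = l) \/ (y' = y /\ y <> p /\ y <> l)).
    { case: Hy => [[Ty Hyl]|[Eyp Tl]].
      - exists y; split => //; right; split => //; split => //; by case: (TS y Ty).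
      - exists l; split => //; left; by split. }
    have [x'' [Tx'' Cx]] := Kx. have [y'' [Ty'' Cy]] := Ky.
    have Hcx'' : ch x'' = ch p.
    { case: Cx => [[_ ->]|[-> _]] //. }
    have Adj : forall z, z \in S -> ch z = ch p -> z <> p -> z <> l ->
       (key z < key l /\ key z < key p) \/ (key l < key z /\ key p < key z) := Hadj.
    case: (eqVneq q p) => [Eqp|Hqp].
    + subst q. right; split => //.
      apply: (Tconv x'' y'' l Tx'' Ty'') => //.
      * exact: inD.
      * by rewrite Hch Hcx''.
      * case: Cx => [[Exp ->]|[Ex [Hxp Hxl]]]; first lra.
        have HxS : x \in S by rewrite -Ex; case: (TS x'' Tx'').
        rewrite Ex. have := Adj x HxS Ecp Hxp Hxl. move=> [[A1 A2]|[A1 A2]]; lra.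
      * case: Cy => [[Eyp ->]|[Ey [Hyp Hyl]]]; first lra.
        have HyS : y \in S by rewrite -Ey; case: (TS y'' Ty'').
        rewrite Ey.
        have := Adj y HyS Hcy Hyp Hyl. move=> [[A1 A2]|[A1 A2]]; lra.
    + left; split => //.
      have Hqp' : q <> p by apply/eqP.
      have HqA := Adj q HqS Hcq' Hqp' Hql.
      apply: (Tconv x'' y'' q Tx'' Ty'') => //.
      * exact: inD.
      * by rewrite Hcq' Hcx''.
      * case: Cx => [[Exp ->]|[-> [Hxp Hxl]]].
        -- subst x. case: HqA => [[A1 A2]|[A1 A2]]; lra.
        -- lra.
      * case: Cy => [[Eyp ->]|[-> [Hyp Hyl]]].
        -- subst y. case: HqA => [[A1 A2]|[A1 A2]]; lra.
        -- lra.
  }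
case: T2m => [[Tm Hml] | [Emp Tl]].
- exists m. split => //. move=> q Tq Hqm.
  have -> : (m == l) = false by apply/negbTE/eqP.
  case: (eqVneq q l) => [Eql|Hql].
  + subst q. apply: Hm; first by right.
    move=> E; case: (TS m Tm) => _ H; by apply: H.
  + apply: Hm => //. left; split => //. exact/eqP.
- subst m. exists l. split => //. move=> q Tq Hql.
  rewrite eqxx. have -> : (q == l) = false by apply/negbTE/eqP.
  apply: Hm; first by left.
  by case: (TS q Tq).
Qed.

Definition RECT (S : {fset point}) (ch : point -> nat) (key : point -> R) : Prop :=
  forall p q r a1 b1 a2 b2, p \in S -> q \in S -> r \in S -> ch q = ch p -> ch r = ch p ->
    key p <= key q -> key q <= key r ->
    in_rect a1 b1 a2 b2 p -> in_rect a1 b1 a2 b2 r -> in_rect a1 b1 a2 b2 q.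

Definition PAL (S : {fset point}) (ch : point -> nat) (c : point -> nat) : Prop :=
  forall p q, p \in S -> q \in S -> c p = c q -> ch p = ch q.

Definition Inv (k : nat) (S : {fset point}) (c : point -> nat) : Prop :=
  exists ch key, [/\ INJ S ch key, RECT S ch key, PAL S ch c, UM S ch key c & colors_within k S c].

Lemma Inv_cf k S c : Inv k S c -> conflict_free S c.
Proof.
move=> [ch [key [Hinj Hrect Hpal Hum Hcol]]] a1 b1 a2 b2 [p0 [Hp0 R0]].
pose T := fun q => [/\ q \in S, ch q = ch p0 & in_rect a1 b1 a2 b2 q].
have [m [[Hm Hcm Rm] Hmax]] : exists m, T m /\ forall q, T q -> q <> m -> (c q < c m)%N.
{ apply: (Hum T _ _ _ p0) => //.
  - by move=> q [].
  - by move=> a b [_ -> _] [_ -> _].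
  - move=> a b q [Ha Hca Ra] [Hb Hcb Rb] Hq Hcq Hkaq Hkqb.
    split => //; first by rewrite Hcq.
    apply: (Hrect a q b) => //; by rewrite ?Hcq ?Hcb ?Hca. }
exists m; split => // q Hq Rq Hqm.
case: (eqVneq (ch q) (ch p0)) => [E|N].
- have := Hmax q (And3 Hq E Rq) Hqm. lia.
- move=> E. move: N. by rewrite (Hpal q m Hq Hm E) Hcm eqxx.
Qed.

Lemma memD1 (S : {fset point}) p q : q \in S `\ p -> q \in S.
Proof. by rewrite in_fsetD1 => /andP []. Qed.

Lemma Inv_step k S c p : Inv k S c -> p \in S ->
  exists c', recolors_at_most_one (S `\ p) c c' /\ Inv k (S `\ p) c'.
Proof.
move=> [ch [key [Hinj Hrect Hpal Hum Hcol]]] Hp.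
have Hinj' : INJ (S `\ p) ch key.
{ move=> x y /memD1 Hx /memD1 Hy. exact: Hinj. }
have Hrect' : RECT (S `\ p) ch key.
{ move=> x y z a1 b1 a2 b2 /memD1 Hx /memD1 Hy /memD1 Hz. exact: Hrect. }
case: (classic (exists l, [/\ l \in S, ch l = ch p, l <> p,
     (forall z, z \in S -> ch z = ch p -> z <> p -> z <> l ->
       (key z < key l /\ key z < key p) \/ (key l < key z /\ key p < key z)) &
     (c l < c p)%N])) => [[l [Hl Hcl Hlp Hadj Hclp]]|Hno].
- exists (fun q => if q == l then c p else c q). split.
  { exists l => q _ Hql. by rewrite (introF eqP Hql). }
  exists ch, key; split => //.
  + move=> x y /memD1 Hx /memD1 Hy.
    case: (eqVneq x l) => [->|Hxl]; case: (eqVneq y l) => [->|Hyl] //=.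
    * move=> E. by rewrite Hcl (Hpal p y Hp Hy E).
    * move=> E. by rewrite Hcl (Hpal p x Hp Hx (esym E)).
    * exact: Hpal.
  + apply: swap => //.
    apply: safe => // a b Ha Hb Hca Hcb Hka Hkb.
    exists p; split => //.
    * by move=> E; apply: Hlp.
    * split.
      -- case: (eqVneq a p) => [->|Hap]; first lra.
         have Hal : a <> l by move=> E; subst a; lra.
         have Hap' : a <> p by apply/eqP.
         case: (Hadj a Ha (etrans Hca Hcl) Hap' Hal) => [[]|[]]; lra.
      -- case: (eqVneq b p) => [->|Hbp]; first lra.
         have Hbl : b <> l by move=> E; subst b; lra.
         have Hbp' : b <> p by apply/eqP.
         case: (Hadj b Hb (etrans Hcb Hcl) Hbp' Hbl) => [[]|[]]; lra.
  + move=> q /memD1 Hq. case: (q == l); exact: Hcol.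
- exists c. split.
  { exists p => q _ _. by []. }
  exists ch, key; split => //.
  + move=> x y /memD1 Hx /memD1 Hy. exact: Hpal.
  + apply: safe => // a b Ha Hb Hca Hcb Hka Hkb.
    have [l [Hl Hcl Hal Hlp Hmax]] := left_nb Ha Hca Hka.
    have Hlp' : l <> p by move=> E; subst l; lra.
    have Hadj : forall z, z \in S -> ch z = ch p -> z <> p -> z <> l ->
       (key z < key l /\ key z < key p) \/ (key l < key z /\ key p < key z).
    { move=> z Hz Hcz Hzp Hzl.
      case: (Rlt_le_dec (key z) (key p)) => H.
      - left; split => //. have := Hmax z Hz Hcz H => H2.
        case: (Rle_lt_or_eq_dec _ _ H2) => // E. exfalso; apply: Hzl; apply: Hinj => //. by rewrite Hcz.
      - right. case: (Rle_lt_or_eq_dec _ _ H) => E; first lra.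
        exfalso; apply: Hzp; apply: Hinj => //. }
    have Hne : c l <> c p.
    { pose T := fun q => q = l \/ q = p.
      have [m [Tm Hm]] : exists m, T m /\ forall q, T q -> q <> m -> (c q < c m)%N.
      { apply: (Hum T _ _ _ l); last by left.
        - by move=> q [->|->].
        - by move=> x y [->|->] [->|->].
        - move=> x y q Tx Ty Hq Hcq Hxq Hqy.
          case: (classic (q = l)) => [->|Hql]; first by left.
          case: (classic (q = p)) => [->|Hqp]; first by right.
          have Hcq' : ch q = ch p by rewrite Hcq; case: Tx => ->.
          case: (Hadj q Hq Hcq' Hqp Hql) => [[]|[]] => H1 H2;
            case: Tx => ?; subst x; case: Ty => ?; subst y; lra. }
      move=> E. case: Tm => ?; subst m.
      - have := Hm p (or_intror erefl) (fun E' => Hlp' (esym E')). lia.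
      - have := Hm l (or_introl erefl) Hlp'. lia. }
    exists l; split => //; first by split; lra.
    have : ~ (c l < c p)%N.
    { move=> Hlt. apply: Hno. exists l; split => //. }
    lia.
  + move=> q /memD1 Hq; exact: Hcol.
Qed.

Lemma Inv_wd k : forall n S c, (#|` S| <= n)%N -> Inv k S c -> weak_deletions k S c.
Proof.
elim => [|n IH] S c Hn HI.
- have [ch [key [_ _ _ _ Hcol]]] := HI.
  apply: WeakDel; [exact: (Inv_cf HI) | exact: Hcol |].
  move=> p Hp. exfalso. move: Hn. by rewrite (cardfsD1 p S) Hp.
- have [ch [key [_ _ _ _ Hcol]]] := HI.
  apply: WeakDel; [exact: (Inv_cf HI) | exact: Hcol |].
  move=> p Hp. have [c' [Hrec HI']] := Inv_step HI Hp.
  exists c'; split => //. apply: IH HI'.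
  move: Hn. rewrite (cardfsD1 p S) Hp. lia.
Qed.

Definition le2 (p q : point) : Prop := p.1 <= q.1 /\ p.2 <= q.2.

Definition le2b (p q : point) : bool :=
  if Rle_dec p.1 q.1 then (if Rle_dec p.2 q.2 then true else false) else false.

Lemma le2bP p q : le2b p q = true <-> le2 p q.
Proof.
rewrite /le2b /le2; case: (Rle_dec p.1 q.1) => H1; case: (Rle_dec p.2 q.2) => H2;
  split => // [[]] //.
Qed.

Lemma le2_antisym p q : le2 p q -> le2 q p -> p = q.
Proof.
move: p q => [p1 p2] [q1 q2] [/= H1 H2] [/= H3 H4].
have -> : p1 = q1 by lra. have -> : p2 = q2 by lra. by [].
Qed.

Lemma le2_trans p q r : le2 p q -> le2 q r -> le2 p r.
Proof. move=> [H1 H2] [H3 H4]; split; lra. Qed.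

Definition compat (b : bool) (p q : point) : Prop :=
  if b then (le2 p q \/ le2 q p)
  else ((p.1 <= q.1 /\ q.2 <= p.2) \/ (q.1 <= p.1 /\ p.2 <= q.2)).

Definition chainb (A : {fset point}) : bool :=
  all (fun x => all (fun y => le2b x y || le2b y x) A) A.
Definition belowb (p : point) (A : {fset point}) : bool := all (fun x => le2b x p) A.

Lemma chainbP A : chainb A -> forall x y, x \in A -> y \in A -> le2 x y \/ le2 y x.
Proof.
move=> /allP H x y Hx Hy. have /allP H2 := H x Hx. have := H2 y Hy.
case/orP => /le2bP; tauto.
Qed.

Lemma decomp (s : nat) : (0 < s)%N -> forall S : {fset point},
  exists (ch : point -> nat) (typ : nat -> bool) (t : nat),
  [/\ (t <= #|` S| %/ s + s)%N, (forall p, p \in S -> ch p < t)%N &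
      (forall p q, p \in S -> q \in S -> ch p = ch q -> compat (typ (ch p)) p q)].
Proof.
move=> Hs S. move Hn: #|` S| => n. elim/ltn_ind: n S Hn => n IH S Hn.
case: (classic (exists A : {fset point}, [/\ A `<=` S, (s < #|` A|)%N &
          forall x y, x \in A -> y \in A -> le2 x y \/ le2 y x]))
  => [[A [HAS HAs HAc]]|Hno].
- have HcA : #|` S `\` A| = (n - #|` A|)%N by rewrite cardfsDS // Hn.
  have HAn : (#|` A| <= n)%N by rewrite -Hn; apply: fsubset_leq_card.
  have Hlt : (n - #|` A| < n)%N by lia.
  have [ch [typ [t [Ht Hch Hcomp]]]] := IH _ Hlt (S `\` A) HcA.
  exists (fun p => if p \in A then 0%N else (ch p).+1),
         (fun j => if j is j'.+1 then typ j' else true), t.+1.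
  split.
  +
    have H1 : ((n - #|` A|) %/ s + 1 = (n - #|` A| + 1 * s) %/ s)%N by rewrite divnDMl.
    have H2 : ((n - #|` A| + 1 * s) %/ s <= n %/ s)%N by apply: leq_div2r; lia.
    lia.
  + move=> p Hp. case: (boolP (p \in A)) => HpA //.
    have : p \in S `\` A by rewrite in_fsetD HpA Hp.
    move/Hch. lia.
  + move=> p q Hp Hq.
    case: (boolP (p \in A)) => HpA; case: (boolP (q \in A)) => HqA //.
    * move=> _ /=. exact: HAc.
    * move=> [E]. rewrite /=. apply: Hcomp => //; by rewrite in_fsetD ?HpA ?HqA ?Hp ?Hq.
- pose h := fun p => \max_(A <- fpowerset S | chainb A && belowb p A) #|` A|.
  have h1 : forall p, p \in S -> (1 <= h p)%N.
  { move=> p Hp. rewrite -(cardfs1 p). apply: (@leq_bigmax_seq _ _ _ _ ([fset p])).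
    - by rewrite fpowersetE fsub1set.
    - apply/andP; split.
      + apply/allP => x; rewrite in_fset1 => /eqP ->; apply/allP => y; rewrite in_fset1 => /eqP ->.
        have : le2b p p by apply/le2bP; split; lra. by move=> ->.
      + apply/allP => x; rewrite in_fset1 => /eqP ->. apply/le2bP; split; lra. }
  have h2 : forall p, (h p <= s)%N.
  { move=> p. apply/bigmax_leqP_seq => A; rewrite fpowersetE => HAS /andP [HAc _].
    rewrite leqNgt; apply/negP => Hlt. apply: Hno. exists A; split => //. exact: chainbP. }
  have h3 : forall p q, p \in S -> q \in S -> p <> q -> le2 q p -> (h q < h p)%N.
  { move=> p q Hp Hq Hpq Hqp.
    have : (h q <= (h p).-1)%N.
    { apply/bigmax_leqP_seq => A; rewrite fpowersetE => HAS /andP [HAc HAb].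
      have HbA : forall x, x \in A -> le2 x q.
      { move=> x Hx. apply/le2bP. by move/allP: HAb => /(_ x Hx). }
      have HpA : p \notin A.
      { apply/negP => HpA. apply: Hpq. apply: le2_antisym => //. exact: HbA. }
      have : (#|` p |` A| <= h p)%N.
      { apply: (@leq_bigmax_seq _ _ _ _ (p |` A)).
        - by rewrite fpowersetE fsubUset fsub1set Hp HAS.
        - apply/andP; split.
          + apply/allP => x; rewrite in_fset1U => /orP [/eqP ->|Hx];
            apply/allP => y; rewrite in_fset1U => /orP [/eqP ->|Hy].
            * have : le2b p p by apply/le2bP; split; lra. by move=> ->.
            * have : le2b y p by apply/le2bP; apply: le2_trans (HbA y Hy) Hqp. by move=> ->; rewrite orbT.
            * have : le2b x p by apply/le2bP; apply: le2_trans (HbA x Hx) Hqp. by move=> ->.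
            * have [/le2bP -> | /le2bP ->] := chainbP HAc Hx Hy => //; by rewrite orbT.
          + apply/allP => x; rewrite in_fset1U => /orP [/eqP ->|Hx].
            * apply/le2bP; split; lra.
            * apply/le2bP; apply: le2_trans (HbA x Hx) Hqp. }
      rewrite cardfsU1 HpA. lia. }
    have := h1 p Hp. lia. }
  exists (fun p => (h p).-1), (fun _ => false), s. split.
  + exact: leq_addl.
  + move=> p Hp. have := h1 p Hp. have := h2 p. lia.
  + move=> p q Hp Hq Hhpq /=.
    case: (classic (p = q)) => [->|Hpq]; first by left; split; lra.
    have Nqp : ~ le2 q p.
    { move=> H. have := h3 p q Hp Hq Hpq H. have := h1 q Hq. have := h1 p Hp. lia. }
    have Npq : ~ le2 p q.
    { move=> H. have := h3 q p Hq Hp (fun E => Hpq (esym E)) H. have := h1 q Hq. have := h1 p Hp. lia. }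
    rewrite /le2 in Nqp Npq.
    move: Nqp Npq. case: p {Hp Hhpq Hpq} => [p1 p2]; case: q {Hq} => [q1 q2] /= Nqp Npq.
    case: (Rle_dec p1 q1) => H1.
    * left. split => //. apply: Rnot_lt_le => H2. apply: Npq. split; lra.
    * right. split; first lra. apply: Rnot_lt_le => H2. apply: Nqp. split; lra.
Qed.

Lemma ruler i k : (i < k)%N -> logn 2 i.+1 = logn 2 k.+1 ->
  exists u, [/\ (i < u)%N, (u < k)%N & (logn 2 i.+1 < logn 2 u.+1)%N].
Proof.
move=> Hik He.
have pr2 : prime 2 by [].
have [a Ha Hia] := pfactor_coprime pr2 (ltn0Sn i).
have [b Hb Hkb] := pfactor_coprime pr2 (ltn0Sn k).
rewrite -He in Hkb.
set e := logn 2 i.+1 in Hia Hkb *.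
have oa : odd a by rewrite -coprimen2 coprime_sym.
have ob : odd b by rewrite -coprimen2 coprime_sym.
have HP : (0 < 2 ^ e)%N by rewrite expn_gt0.
have Hab : (a < b)%N.
{ rewrite -(ltn_pmul2r HP) -Hia -Hkb. by []. }
have Hab1 : (a.+1 < b)%N.
{ rewrite ltn_neqAle Hab andbT. apply/eqP => E. move: ob. by rewrite -E /= oa. }
exists (a.+1 * 2 ^ e).-1. split.
- nia.
- nia.
- have -> : ((a.+1 * 2 ^ e).-1.+1 = a.+1 * 2 ^ e)%N by nia.
  rewrite -pfactor_dvdn //; last by nia.
  rewrite expnS. apply: dvdn_mul; last exact: dvdnn. by rewrite dvdn2 /= oa.
Qed.

Definition keyf (ch : point -> nat) (typ : nat -> bool) (p : point) : R :=
  if typ (ch p) then p.1 + p.2 else p.1 - p.2.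

Lemma keyf_inj ch typ p q : ch p = ch q -> compat (typ (ch p)) p q ->
  keyf ch typ p = keyf ch typ q -> p = q.
Proof.
move=> Hc; rewrite /keyf -Hc; case: (typ (ch p)) => /=; clear Hc;
  case: p => p1 p2; case: q => q1 q2; rewrite /le2 /=.
- move=> [[H1 H2]|[H1 H2]] E; f_equal; lra.
- move=> [[H1 H2]|[H1 H2]] E; f_equal; lra.
Qed.

Lemma keyf_rect ch typ p q r a1 b1 a2 b2 : ch q = ch p -> ch r = ch p ->
  compat (typ (ch p)) p q -> compat (typ (ch p)) q r ->
  keyf ch typ p <= keyf ch typ q -> keyf ch typ q <= keyf ch typ r ->
  in_rect a1 b1 a2 b2 p -> in_rect a1 b1 a2 b2 r -> in_rect a1 b1 a2 b2 q.
Proof.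
move=> Hq Hr; rewrite /keyf Hq Hr; case: (typ (ch p)) => /=; clear Hq Hr;
  case: p => p1 p2; case: q => q1 q2; case: r => r1 r2; rewrite /le2 /in_rect /=.
- move=> [[H1 H2]|[H1 H2]] [[H3 H4]|[H3 H4]] K1 K2 [R1 R2 R3 R4] [R5 R6 R7 R8]; split; lra.
- move=> [[H1 H2]|[H1 H2]] [[H3 H4]|[H3 H4]] K1 K2 [R1 R2 R3 R4] [R5 R6 R7 R8]; split; lra.
Qed.

Section Coloring.
Variables (S : {fset point}) (ch : point -> nat) (typ : nat -> bool) (L t : nat).

Definition key := keyf ch typ.
Definition rleb (x y : point) : bool := if Rle_dec (key x) (key y) then true else false.

Lemma rlebP x y : rleb x y = true <-> key x <= key y.
Proof. rewrite /rleb; case: (Rle_dec (key x) (key y)) => H; split => //. Qed.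

Lemma rleb_total : total rleb.
Proof.
move=> x y. rewrite /rleb. case: (Rle_dec (key x) (key y)) => //= H.
case: (Rle_dec (key y) (key x)) => //= H2. exfalso; lra.
Qed.

Lemma rleb_trans : transitive rleb.
Proof. move=> y x z /rlebP H1 /rlebP H2. apply/rlebP. lra. Qed.

Lemma rleb_refl : reflexive rleb.
Proof. move=> x. apply/rlebP. lra. Qed.

Definition sj (j : nat) : seq point := sort rleb [seq q <- (S : seq point) | ch q == j].

Definition col (p : point) : nat := (L * ch p + logn 2 (index p (sj (ch p))).+1)%N.

Lemma mem_sj p j : (p \in sj j) = (p \in S) && (ch p == j).
Proof. by rewrite mem_sort mem_filter andbC. Qed.

Lemma sj_uniq j : uniq (sj j).
Proof. by rewrite sort_uniq filter_uniq // fset_uniq. Qed.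

Lemma sj_sorted j : sorted rleb (sj j).
Proof. apply: sort_sorted. exact: rleb_total. Qed.

Lemma size_sj j : (size (sj j) <= #|` S|)%N.
Proof. by rewrite size_sort size_filter count_size. Qed.

Hypothesis HL : forall p, p \in S -> (logn 2 (index p (sj (ch p))).+1 < L)%N.

Lemma col_UM : UM S ch key col.
Proof.
move=> T Tsub Tch Tconv q0 Tq0.
have [m [Hm Tm Hmax]] := @L_max (fun q => INR (col q)) T S (ex_intro _ q0 (conj (Tsub q0 Tq0) Tq0)).
exists m; split => // q Tq Hqm.
have Hle : (col q <= col m)%N by apply/leP; apply: INR_le; exact: Hmax (Tsub q Tq) Tq.
set s := sj (ch m).
have Hs : forall a, T a -> a \in s.
{ move=> a Ta. by rewrite mem_sj (Tsub a Ta) (Tch a m Ta Tm) eqxx. }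
have Hcol : forall a, T a -> col a = (L * ch m + logn 2 (index a s).+1)%N.
{ move=> a Ta. by rewrite /col (Tch a m Ta Tm). }
have claim : forall a b, T a -> T b -> (index a s < index b s)%N ->
    logn 2 (index a s).+1 = logn 2 (index b s).+1 ->
    logn 2 (index a s).+1 = logn 2 (index m s).+1 -> False.
{ move=> a b Ta Tb Hab Eab Eam.
  have [u [Hau Hub Hlog]] := ruler Hab Eab.
  have Hbs : (index b s < size s)%N by rewrite index_mem; exact: Hs.
  have Hus : (u < size s)%N by lia.
  set z := nth m s u.
  have Hzs : z \in s by exact: mem_nth.
  move: (Hzs); rewrite mem_sj => /andP [HzS /eqP Hcz].
  have Hsort := sj_sorted (ch m).
  have K1 : rleb a z.
  { have := @sorted_leq_nth _ rleb rleb_trans rleb_refl m s Hsort (index a s) u.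
    rewrite nth_index; last exact: Hs.
    apply; rewrite /in_mem /=; [rewrite index_mem; exact: Hs | lia | lia]. }
  have K2 : rleb z b.
  { have := @sorted_leq_nth _ rleb rleb_trans rleb_refl m s Hsort u (index b s).
    rewrite (nth_index _ (Hs b Tb)).
    apply; rewrite /in_mem /=; lia. }
  move/rlebP: K1 => K1. move/rlebP: K2 => K2.
  have Tz : T z.
  { apply: (Tconv a b z Ta Tb HzS) => //. by rewrite Hcz (Tch a m Ta Tm). }
  have := Hmax z HzS Tz. move/INR_le/leP.
  rewrite (Hcol z Tz) (Hcol m Tm) /z index_uniq //; last exact: sj_uniq.
  lia. }
rewrite ltn_neqAle Hle andbT; apply/eqP => E.
have Hcq := Tch q m Tq Tm.
have El : logn 2 (index q s).+1 = logn 2 (index m s).+1.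
{ move: E; rewrite (Hcol q Tq) (Hcol m Tm). lia. }
have Nqm : index q s <> index m s.
{ move=> Ei. apply: Hqm. by rewrite -(nth_index m (Hs q Tq)) Ei nth_index //; exact: Hs. }
case: (ltngtP (index q s) (index m s)) => Hi.
- exact: (claim q m Tq Tm Hi El El).
- exact: (claim m q Tm Tq Hi (esym El) erefl).
- exact: Nqm.
Qed.
End Coloring.

Lemma divpal (L a b x y : nat) : (x < L)%N -> (y < L)%N -> (L * a + x = L * b + y)%N -> a = b.
Proof. move=> *. nia. Qed.

Lemma colb (L a t x : nat) : (x < L)%N -> (a < t)%N -> (L * a + x < L * t)%N.
Proof. move=> *. nia. Qed.

Lemma init_Inv (S : {fset point}) (ch : point -> nat) (typ : nat -> bool) (t : nat) :
  (forall p, p \in S -> ch p < t)%N ->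
  (forall p q, p \in S -> q \in S -> ch p = ch q -> compat (typ (ch p)) p q) ->
  Inv ((trunc_log 2 #|` S|).+1 * t) S (col S ch typ (trunc_log 2 #|` S|).+1).
Proof.
move=> Hch Hcomp.
set L := (trunc_log 2 #|` S|).+1.
have HL : forall p, p \in S -> (logn 2 (index p (sj S ch typ (ch p))).+1 < L)%N.
{ move=> p Hp. set i := index p _.
  have Hi : (i < size (sj S ch typ (ch p)))%N.
  { rewrite index_mem mem_sj Hp eqxx //. }
  have Hsz := size_sj S ch typ (ch p).
  rewrite /L ltnS. apply: trunc_log_max => //.
  apply: leq_trans (dvdn_leq (ltn0Sn i) (pfactor_dvdnn 2 i.+1)) _. lia. }
exists ch, (key ch typ). split.
- move=> p q Hp Hq Hc Hk. apply: keyf_inj Hk => //. exact: Hcomp.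
- move=> p q r a1 b1 a2 b2 Hp Hq Hr Hcq Hcr Hk1 Hk2 R1 R2.
  apply: (keyf_rect Hcq Hcr _ _ Hk1 Hk2 R1 R2).
  + apply: Hcomp => //; by rewrite ?Hcq.
  + rewrite -Hcq. apply: Hcomp => //; by rewrite ?Hcq ?Hcr.
- move=> p q Hp Hq. rewrite /col. apply: divpal; [exact: HL | exact: HL].
- exact: col_UM.
- move=> p Hp. rewrite /col. apply: colb; [exact: HL | exact: Hch].
Qed.

Lemma INR_expn2 T : INR (2 ^ T)%N = (2 ^ T)%R.
Proof.
elim: T => [|T IH] //=. rewrite expnS -IH. 
have -> : (2 * 2 ^ T)%N = Nat.mul 2 (2 ^ T)%N by [].
rewrite mult_INR /=. ring.
Qed.

Lemma INR_muln a b : INR (a * b)%N = INR a * INR b.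
Proof. exact: mult_INR. Qed.

Lemma ln_mono x y : 0 < x -> x <= y -> ln x <= ln y.
Proof.
move=> Hx Hxy. case: (Rle_lt_or_eq_dec _ _ Hxy) => H.
- left; exact: ln_increasing.
- rewrite H; lra.
Qed.

Theorem mainTheorem13 :
  exists (C : R) (n0 : nat), Rlt 0 C /\
    forall P : {fset point}, (n0 <= #|` P|)%N ->
      exists (k : nat) (c : point -> nat),
        Rle (INR k) (Rmult (Rmult C (sqrt (INR #|` P|))) (ln (INR #|` P|))) /\
        weak_deletions k P c.
Proof.
exists 15, 3%N. split; first lra.
move=> P Hn. set n := #|` P| in Hn *.
have [Hs1 Hs2] := Nat.sqrt_spec n (Nat.le_0_l n).
set s := Nat.sqrt n in Hs1 Hs2 *.
have Hs1' : (s * s <= n)%N by apply/leP.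
have Hs2' : (n < s.+1 * s.+1)%N by apply/ltP.
have Hs : (0 < s)%N by case: (s) Hs2' => [|//]; lia.
have [ch [typ [t [Ht Hch Hcomp]]]] := decomp Hs P.
set T := trunc_log 2 n.
exists (T.+1 * t)%N, (col P ch typ T.+1). split; last first.
{ apply: (@Inv_wd _ n) => //. exact: init_Inv. }
have Ht5 : (t <= 5 * s)%N.
{ have : (n %/ s < 4 * s)%N by rewrite ltn_divLR //; nia.
  move: Ht; rewrite -/n. lia. }
have HT : (2 ^ T <= n)%N by apply: trunc_logP => //; lia.
have Rn3 : 3 <= INR n.
{ have : INR 3 <= INR n by apply: le_INR; apply/leP. rewrite /=. lra. }
have Rn0 : 0 < INR n by lra.
have HsR : INR s <= sqrt (INR n).
{ rewrite -(sqrt_square (INR s)); last exact: pos_INR.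
  apply: sqrt_le_1_alt. rewrite -INR_muln. apply: le_INR. exact/leP. }
have HtR : INR t <= 5 * INR s.
{ have : INR t <= INR (5 * s)%N by apply: le_INR; exact/leP.
  rewrite INR_muln /=. lra. }
have Hln1 : 1 <= ln (INR n).
{ rewrite -{1}(ln_exp 1). apply: ln_mono; first exact: exp_pos. have := exp_le_3. lra. }
have HTln : INR T * ln 2 <= ln (INR n).
{ rewrite -ln_pow; last lra. rewrite -INR_expn2. apply: ln_mono.
  - apply: lt_0_INR. apply/ltP. by rewrite expn_gt0.
  - apply: le_INR. exact/leP. }
have Hln2 := ln_lt_2.
have HT2 : INR T <= 2 * ln (INR n).
{ have HT0 := pos_INR T. nra. }
have HL : INR T.+1 <= 3 * ln (INR n) by rewrite S_INR; lra.
have -> : INR (T.+1 * t)%N = INR T.+1 * INR t by rewrite INR_muln.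
have H0t := pos_INR t. have H0L := pos_INR T.+1. have H0s := pos_INR s.
have Hsq := sqrt_pos (INR n).
apply: Rle_trans (_ : INR T.+1 * (5 * sqrt (INR n)) <= _).
- apply: Rmult_le_compat_l => //. lra.
- nra.
Qed.
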